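(* Let $1/n\ll\theta,\gamma\ll\tau\leq 1$ and $k\in\mathbb{N}$. Let $G$ be a digraph on $n$ vertices, $\mathcal{Q}$ a path system in $G$, and $\mathcal{P}_k=\{V_{ij}:i,j\in[k]\}$ a $k^2$-partition of $V(G)$. Let $G'$ with partition $\mathcal{P}'_k$ be obtained by contracting $\mathcal{Q}$ in $G$ with respect to $\mathcal{P}_k$. Then $|\mathcal{B}_k(\mathcal{P}'_k,G')|\leq|\mathcal{B}_k(\mathcal{P}_k,G)|$. Moreover, if $\mathcal{P}_k$ is a $(k^2,\tau,\gamma)$-partition of $G$ and $e(\mathcal{Q})\leq\theta n$, then $\mathcal{P}'_k$ is a $(k^2,\tau/2,2\gamma)$-partition of $G'$.
   Context: Hierarchy convention: $x\ll y$ means $x\leq f(y)$ for some implicitly given non-decreasing function; the statement asserts such functions exist, constants chosen from right to left. A path system in $G$ is a set of vertex-disjoint directed paths in $G$; $e(\mathcal{Q})$ is its total number of edges and $V(\mathcal{Q})$ the set of vertices on its paths. A $k^2$-partition of $V(G)$ is a family $\{V_{ij}:i,j\in[k]\}$ of pairwise disjoint (possibly empty) sets with union $V(G)$; $V_{i*}=\bigcup_jV_{ij}$, $V_{*j}=\bigcup_iV_{ij}$; $E(A,B)$ is the set of edges $ab$ with $a\in A,b\in B$; bad edges $\mathcal{B}_k(\mathcal{P}_k,G)=\bigcup_{i\neq j}E(V_{i*},V_{*j})$. A $(k^2,\tau,\gamma)$-partition of an $N$-vertex digraph is a $k^2$-partition with at most $\gamma N^2$ bad edges and $|V_{i*}|,|V_{*j}|\geq\tau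 N$ for all $i,j$. Contraction: for each path $Q\in\mathcal{Q}$, going from $u$ to $v$, create a new vertex $x_Q$. The vertex set of $G'$ is $(V(G)\setminus V(\mathcal{Q}))\cup\{x_Q:Q\in\mathcal{Q}\}$. For $y\in V(G')$ put $y^-=y^+=y$ if $y\in V(G)$, and $x_Q^-=u$, $x_Q^+=v$ if $Q$ goes from $u$ to $v$; then $yz$ is an edge of $G'$ iff $y^+z^-\in E(G)$ (so $x_Q$ inherits the inneighbours of $u$ and the outneighbours of $v$). The resulting partition is $\mathcal{P}'_k=\{V'_{ij}\}$ where $V'_{ij}$ consists of $V_{ij}\setminus V(\mathcal{Q})$ together with all $x_Q$ such that $Q$ goes from $u$ to $v$ with $u\in V_{*j}$ and $v\in V_{i*}$. *)

(* Defs.v *)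
From mathcomp Require Import all_boot all_order all_algebra.
Set Implicit Arguments. Unset Strict Implicit. Unset Printing Implicit Defensive.
Import Order.TTheory GRing.Theory Num.Theory.
Local Open Scope ring_scope.

(* A digraph is an edge relation G : rel T on a finite vertex type T;
   V(G) is the whole of T. *)

Section Partitions.
Variable T : finType.

Definition is_k2partition k (P : 'I_k -> 'I_k -> {set T}) : Prop :=
  (forall i j i' j', (i, j) != (i', j') -> [disjoint P i j & P i' j']) /\
  (forall x : T, exists i j, x \in P i j).

Definition rowset k (P : 'I_k -> 'I_k -> {set T}) (i : 'I_k) : {set T} :=
  \bigcup_(j < k) P i j.
Definition colset k (P : 'I_k -> 'I_k -> {set T}) (j : 'I_k) : {set T} :=
  \bigcup_(i < k) P i j.

Definition bad_edges (G : rel T) k (P : 'I_k -> 'I_k -> {set T}) : {set T * T} :=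
  [set e : T * T | G e.1 e.2 &&
     [exists i : 'I_k, exists j : 'I_k,
        [&& i != j, e.1 \in rowset P i & e.2 \in colset P j]]].

Definition tg_partition (R : realFieldType) (G : rel T) k
    (P : 'I_k -> 'I_k -> {set T}) (tau gamma : R) : Prop :=
  is_k2partition P /\
  (#|bad_edges G P|%:R <= gamma * (#|T|%:R) ^+ 2) /\
  (forall i, tau * #|T|%:R <= #|rowset P i|%:R) /\
  (forall j, tau * #|T|%:R <= #|colset P j|%:R).

(* Path systems: a path is a pair (x, p) standing for the vertex
   sequence x :: p; Q is a finite list of such paths. *)
Definition pverts (Q : seq (T * seq T)) : seq T :=
  flatten [seq q.1 :: q.2 | q <- Q].

Definition path_system (G : rel T) (Q : seq (T * seq T)) : Prop :=
  uniq (pverts Q) /\ all (fun q => path G q.1 q.2) Q.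

Definition VQ (Q : seq (T * seq T)) : {set T} := [set x | x \in pverts Q].

Definition eQ (Q : seq (T * seq T)) : nat := sumn [seq size q.2 | q <- Q].

Definition pstart (q : T * seq T) : T := q.1.
Definition pend (q : T * seq T) : T := last q.1 q.2.

(* Vertex type of the contracted digraph: vertices of G outside V(Q)
   (inl) together with one new vertex x_Q per path (inr). *)
Definition cvalid (Q : seq (T * seq T)) (y : T + 'I_(size Q)) : bool :=
  match y with inl t => t \notin VQ Q | inr _ => true end.

Definition CV (Q : seq (T * seq T)) := {y : T + 'I_(size Q) | @cvalid Q y}.

Definition cminus (Q : seq (T * seq T)) (y : CV Q) : T :=
  match val y with inl t => t | inr i => pstart (tnth (in_tuple Q) i) end.
Definition cplus (Q : seq (T * seq T)) (y : CV Q) : T :=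
  match val y with inl t => t | inr i => pend (tnth (in_tuple Q) i) end.

Definition contract_graph (G : rel T) (Q : seq (T * seq T)) : rel (CV Q) :=
  fun y z => G (cplus y) (cminus z).

Definition contract_part (Q : seq (T * seq T)) k (P : 'I_k -> 'I_k -> {set T})
    : 'I_k -> 'I_k -> {set CV Q} :=
  fun i j => [set y : CV Q |
    match val y with
    | inl t => t \in P i j
    | inr _ => (cminus y \in colset P j) && (cplus y \in rowset P i)
    end].

End Partitions.

Arguments contract_graph {T} G Q _ _.
Arguments contract_part {T} Q {k} P _ _.

(* Main.v *)
Require Import Defs.
From mathcomp Require Import all_boot all_order all_algebra.
From mathcomp Require Import lra.
Import Order.TTheory GRing.Theory Num.Theory.
Section Aux.
Variable T : finType.
Implicit Types Q : seq (T * seq T).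

Lemma pverts_cons q Q : pverts (q :: Q) = (q.1 :: q.2) ++ pverts Q.
Proof. by []. Qed.

Lemma mem_pverts Q q x : q \in Q -> x \in q.1 :: q.2 -> x \in pverts Q.
Proof.
elim: Q => [|q' Q IH] //.
rewrite in_cons pverts_cons mem_cat => /orP[/eqP<-|qQ] xq; first by apply/orP; left.
by rewrite (IH qQ xq) orbT.
Qed.

Arguments mem_pverts {Q q x}.

Definition goodf (f : T * seq T -> T) := forall q, f q \in q.1 :: q.2.

Lemma goodf_start : goodf (@pstart T).
Proof. by move=> q; rewrite /pstart mem_head. Qed.
Lemma goodf_end : goodf (@pend T).
Proof. by move=> q; rewrite /pend mem_last. Qed.

Lemma nth_inj f Q d : goodf f -> uniq (pverts Q) -> forall i j, i < size Q -> j < size Q ->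
  f (nth d Q i) = f (nth d Q j) -> i = j.
Proof.
move=> gf; elim: Q => [|q Q IH] // U.
move: (U); rewrite pverts_cons cat_uniq => /and3P[_ /hasPn H U'].
case=> [|i] [|j] //= Hi Hj E.
- exfalso; have := mem_pverts (mem_nth d Hj) (gf (nth d Q j)).
  by move=> /H /negP; apply; rewrite -E gf.
- exfalso; have := mem_pverts (mem_nth d Hi) (gf (nth d Q i)).
  by move=> /H /negP; apply; rewrite E gf.
- by rewrite (IH U' i j).
Qed.

Lemma card_VQ Q : #|VQ Q| <= size (pverts Q).
Proof. by rewrite cardsE card_size. Qed.

Lemma card_VQ_ends f Q : goodf f -> #|VQ Q :\: [set x | x \in map f Q]| <= eQ Q.
Proof.
move=> gf; elim: Q => [|q Q IH].
  exact: (leq_trans (subset_leq_card (subsetDl (VQ [::]) [set x | x \in map f [::]])) (card_VQ [::])).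
have sub : VQ (q::Q) :\: [set x | x \in map f (q::Q)] \subset
   ([set x | x \in q.1::q.2] :\ f q) :|: (VQ Q :\: [set x | x \in map f Q]).
  apply/subsetP => x; rewrite !in_setD !in_setU !in_setD1 !in_set pverts_cons mem_cat map_cons in_cons.
  case/andP => /norP[H1 H2] /orP[H|H]; apply/orP; [left|right]; apply/andP; split => //.
apply: leq_trans (subset_leq_card sub) _.
rewrite cardsU; apply: leq_trans (leq_subr _ _) _.
have -> : eQ (q :: Q) = size q.2 + eQ Q by [].
apply: leq_add => //.
have := cardsD1 (f q) [set x | x \in q.1::q.2].
rewrite in_set gf add1n => E.
rewrite cardsE in E.
have : #|q.1 :: q.2| <= (size q.2).+1 by apply: card_size.
by rewrite E ltnS.
Qed.

Lemma cover_sub Q f (g : CV Q -> T) (A : {set T}) (A' : {set CV Q}) :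
  (forall y, g y = match val y with inl t => t | inr i => f (tnth (in_tuple Q) i) end) ->
  (forall t (H : @cvalid T Q (inl t)), t \in A -> exist _ (inl t) H \in A') ->
  (forall i, f (tnth (in_tuple Q) i) \in A -> exist (@cvalid T Q) (inr i) isT \in A') ->
  A \subset g @: A' :|: (VQ Q :\: [set x | x \in map f Q]).
Proof.
move=> gE H1 H2; apply/subsetP => t tA.
case tV: (t \in VQ Q).
  case tE: (t \in map f Q).
    move/mapP: tE => [q qQ tq]; subst t.
    have iQ: index q Q < size Q by rewrite index_mem.
    have tq : tnth (in_tuple Q) (Ordinal iQ) = q by rewrite (tnth_nth q) /= nth_index.
    apply/setUP; left; apply/imsetP; exists (exist _ (inr (Ordinal iQ)) isT).
      by apply: H2; rewrite tq.
    by rewrite gE /= tq.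
  by apply/setUP; right; rewrite in_setD tV in_set tE.
have H : @cvalid T Q (inl t) by rewrite /cvalid tV.
apply/setUP; left; apply/imsetP; exists (exist _ (inl t) H); [exact: H1 | by rewrite gE].
Qed.

Lemma g_inj Q f (g : CV Q -> T) : goodf f -> uniq (pverts Q) ->
  (forall y, g y = match val y with inl t => t | inr i => f (tnth (in_tuple Q) i) end) ->
  injective g.
Proof.
move=> gf U gE [[t|i] Hy] [[t'|i'] Hy']; rewrite !gE /=.
- by move=> e; apply: val_inj; rewrite /= e.
- move=> e; exfalso; move: Hy; rewrite /= e /VQ in_set.
  by rewrite (mem_pverts (mem_tnth i' (in_tuple Q)) (gf _)).
- move=> e; exfalso; move: Hy'; rewrite /= -e /VQ in_set.
  by rewrite (mem_pverts (mem_tnth i (in_tuple Q)) (gf _)).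
- have d := tnth (in_tuple Q) i.
  rewrite !(tnth_nth d) /= => e.
  have := @nth_inj f Q d gf U _ _ (ltn_ord i) (ltn_ord i') e.
  by move=> e'; apply: val_inj; rewrite /=; congr inr; apply: val_inj.
Qed.

End Aux.

Section Main.
Variables (T : finType) (k : nat) (G : rel T) (Q : seq (T * seq T))
  (P : 'I_k -> 'I_k -> {set T}).
Hypothesis U : uniq (pverts Q).
Hypothesis Pdisj : forall i j i' j', (i, j) != (i', j') -> [disjoint P i j & P i' j'].
Hypothesis Pcov : forall x : T, exists i j, x \in P i j.

Let P' := contract_part Q P.

Lemma cp_inj : injective (@cplus T Q).
Proof. exact: (@g_inj T Q _ _ (@goodf_end T) U (fun _ => erefl)). Qed.
Lemma cm_inj : injective (@cminus T Q).
Proof. exact: (@g_inj T Q _ _ (@goodf_start T) U (fun _ => erefl)). Qed.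

Lemma cell x i j i' j' : x \in P i j -> x \in P i' j' -> i = i' /\ j = j'.
Proof.
case E: ((i, j) == (i', j')); first by move/eqP: E => [-> ->].
by move=> H; rewrite (disjointFr (@Pdisj _ _ _ _ (negbT E)) H).
Qed.

Lemma row_uniq x i i' : x \in rowset P i -> x \in rowset P i' -> i = i'.
Proof.
by move=> /bigcupP[j _ H] /bigcupP[j' _ H']; case: (@cell x _ _ _ _ H H').
Qed.
Lemma col_uniq x j j' : x \in colset P j -> x \in colset P j' -> j = j'.
Proof.
by move=> /bigcupP[i _ H] /bigcupP[i' _ H']; case: (@cell x _ _ _ _ H H').
Qed.

Lemma row' y i : y \in rowset P' i -> cplus y \in rowset P i.
Proof.
move=> /bigcupP[j _]; rewrite in_set; case: y => [[t|idx] Hy] /=.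
  by move=> tP; apply/bigcupP; exists j.
by case/andP.
Qed.
Lemma col' y j : y \in colset P' j -> cminus y \in colset P j.
Proof.
move=> /bigcupP[i _]; rewrite in_set; case: y => [[t|idx] Hy] /=.
  by move=> tP; apply/bigcupP; exists i.
by case/andP.
Qed.

Arguments row' {y i}.
Arguments col' {y j}.
Arguments row_uniq {x i i'}.
Arguments col_uniq {x j j'}.

Lemma part1 : #|bad_edges (contract_graph G Q) P'| <= #|bad_edges G P|.
Proof.
pose f := fun e : CV Q * CV Q => (cplus e.1, cminus e.2).
have finj : injective f.
  by move=> [y z] [y' z'] [/cp_inj -> /cm_inj ->].
rewrite -(card_imset _ finj); apply: subset_leq_card.
apply/subsetP => _ /imsetP[[y z] H ->].
move: H; rewrite !in_set /= => /andP[Gyz /existsP[i /existsP[j /and3P[ij yi zj]]]].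
apply/andP; split; first exact: Gyz.
apply/existsP; exists i; apply/existsP; exists j.
by rewrite ij (row' yi) (col' zj).
Qed.

Lemma part_k2 : is_k2partition P'.
Proof.
split.
  move=> i j i' j' ne; rewrite -setI_eq0; apply/eqP/setP => y.
  rewrite !in_set; case: y => [[t|idx] Hy] /=.
    apply/negP => /andP[H H']; case: (@cell t _ _ _ _ H H') => e1 e2.
    by move: ne; rewrite e1 e2 eqxx.
  apply/negP => /andP[/andP[c r] /andP[c' r']].
  by move: ne; rewrite (row_uniq r r') (col_uniq c c') eqxx.
case=> [[t|idx] Hy].
  have [i [j H]] := Pcov t; exists i, j; by rewrite in_set.
have [a [j Ha]] := Pcov (cminus (exist _ (inr idx) Hy)).
have [i [b Hb]] := Pcov (cplus (exist _ (inr idx) Hy)).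
exists i, j; rewrite in_set /=; apply/andP; split.
  by apply/bigcupP; exists a.
by apply/bigcupP; exists b.
Qed.

Lemma card_CV_le : #|{: CV Q}| <= #|T|.
Proof. exact: leq_card cp_inj. Qed.

Lemma card_T_le : #|T| <= #|{: CV Q}| + eQ Q.
Proof.
have S := @cover_sub T Q (@pend T) (@cplus T Q) setT setT (fun _ => erefl)
  (fun t H _ => in_setT _) (fun i _ => in_setT _).
rewrite -cardsT; apply: leq_trans (subset_leq_card S) _.
rewrite cardsU; apply: leq_trans (leq_subr _ _) _.
apply: leq_add; last exact: (@card_VQ_ends T _ Q (@goodf_end T)).
by rewrite -cardsT leq_imset_card.
Qed.

Lemma row_le i : #|rowset P i| <= #|rowset P' i| + eQ Q.
Proof.
have S := @cover_sub T Q (@pend T) (@cplus T Q) (rowset P i) (rowset P' i) (fun _ => erefl).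
have {}S : rowset P i \subset (@cplus T Q) @: rowset P' i :|: (VQ Q :\: [set x | x \in map (@pend T) Q]).
  apply: S.
    move=> t H /bigcupP[j _ tP]; apply/bigcupP; exists j => //; by rewrite in_set.
  move=> idx Hi.
  have [a [j Ha]] := Pcov (pstart (tnth (in_tuple Q) idx)).
  apply/bigcupP; exists j => //; rewrite in_set /=; apply/andP; split => //.
  by apply/bigcupP; exists a.
apply: leq_trans (subset_leq_card S) _.
rewrite cardsU; apply: leq_trans (leq_subr _ _) _.
apply: leq_add; last exact: (@card_VQ_ends T _ Q (@goodf_end T)).
exact: leq_imset_card.
Qed.

Lemma col_le j : #|colset P j| <= #|colset P' j| + eQ Q.
Proof.
have S := @cover_sub T Q (@pstart T) (@cminus T Q) (colset P j) (colset P' j) (fun _ => erefl).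
have {}S : colset P j \subset (@cminus T Q) @: colset P' j :|: (VQ Q :\: [set x | x \in map (@pstart T) Q]).
  apply: S.
    move=> t H /bigcupP[i _ tP]; apply/bigcupP; exists i => //; by rewrite in_set.
  move=> idx Hi.
  have [i [b Hb]] := Pcov (pend (tnth (in_tuple Q) idx)).
  apply/bigcupP; exists i => //; rewrite in_set /=; apply/andP; split => //.
  by apply/bigcupP; exists b.
apply: leq_trans (subset_leq_card S) _.
rewrite cardsU; apply: leq_trans (leq_subr _ _) _.
apply: leq_add; last exact: (@card_VQ_ends T _ Q (@goodf_start T)).
exact: leq_imset_card.
Qed.

End Main.

Local Open Scope ring_scope.

Theorem proposition4p9 (R : realFieldType) :
  forall tau : R, 0 < tau <= 1 ->
  exists delta : R, 0 < delta /\
  forall theta gamma : R, 0 < theta <= delta -> 0 < gamma <= delta ->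
  exists n0 : nat,
  forall (T : finType) (k : nat) (G : rel T) (Q : seq (T * seq T))
         (P : 'I_k -> 'I_k -> {set T}),
    (n0 <= #|T|)%N ->
    irreflexive G ->
    path_system G Q ->
    is_k2partition P ->
    (#|bad_edges (contract_graph G Q) (contract_part Q P)| <= #|bad_edges G P|)%N /\
    (tg_partition G P tau gamma ->
     (eQ Q)%:R <= theta * #|T|%:R ->
     tg_partition (contract_graph G Q) (contract_part Q P) (tau / 2) (2 * gamma)).
Proof.
move=> tau /andP[tau0 tau1]; exists (tau / 4); split; first lra.
move=> theta gamma /andP[th0 thd] /andP[g0 gd]; exists 0%N.
move=> T k G Q P _ _ [U _] [Pdisj Pcov].
have p1 := @part1 T k G Q P U.
split => // -[_ [Hbad [Hrow Hcol]]] HeQ.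
have hn' : (#|{: CV Q}|%:R : R) <= #|T|%:R by rewrite ler_nat (@card_CV_le T Q U).
have hn : (#|T|%:R : R) <= #|{: CV Q}|%:R + (eQ Q)%:R by rewrite -natrD ler_nat (@card_T_le T Q).
have hb : (#|bad_edges (contract_graph G Q) (contract_part Q P)|%:R : R) <= #|bad_edges G P|%:R
  by rewrite ler_nat.
have n0 : (0 : R) <= #|T|%:R by [].
set n := (#|T|%:R : R) in hn' hn n0 Hbad Hrow Hcol HeQ *.
set n' := (#|{: CV Q}|%:R : R) in hn' hn *.
have te : theta * n <= tau / 4 * n by apply: ler_wpM2r.
have t1 : tau / 4 * n <= 1 / 4 * n by apply: ler_wpM2r => //; lra.
have t2 : tau / 2 * n' <= tau / 2 * n by apply: ler_wpM2l => //; lra.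
split; first exact: (@part_k2 T k Q P Pdisj Pcov).
rewrite -/n'.
split.
  apply: le_trans hb _.
  have h34 : 3 / 4 * n <= n' by lra.
  have hsq : (3 / 4 * n) ^+ 2 <= n' ^+ 2 by apply: lerXn2r; rewrite ?nnegrE; lra.
  have : gamma * (3 / 4 * n) ^+ 2 <= gamma * n' ^+ 2 by apply: ler_wpM2l; lra.
  rewrite exprMn; nra.
split.
  move=> i; have := @row_le T k Q P Pcov i; rewrite -(ler_nat R) natrD => hr.
  apply: le_trans (_ : _ <= #|rowset P i|%:R - (eQ Q)%:R) _.
    have := Hrow i; lra.
  by rewrite lerBlDr.
move=> j; have := @col_le T k Q P Pcov j; rewrite -(ler_nat R) natrD => hr.
apply: le_trans (_ : _ <= #|colset P j|%:R - (eQ Q)%:R) _.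
  have := Hcol j; lra.
by rewrite lerBlDr.
Qed.
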